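(* If $\mathsf B$ is a bad piece, then for any two distinct vertices $v_1,v_2\in V(\mathsf B)$ there exists a subgraph of $\mathsf B$ which is a rainbow path with terminals $v_1$ and $v_2$.
   Context: A (colored) graph is a finite set $\mathsf G$ of pairs $(e,\alpha)$, where the $e$'s are pairwise distinct 2-element subsets of a vertex set and $\alpha$ is a color (colors may repeat). $V(\mathsf G)$ is its vertex set and $\chi(\mathsf G)$ the set of colors used; $\mathsf G$ is rainbow if $|\chi(\mathsf G)|=|\mathsf G|$ and almost rainbow if $|\chi(\mathsf G)|=|\mathsf G|-1$. A subgraph is a subset. A path is a colored graph whose underlying uncolored edges form a path with two distinct terminals. A theta graph is a union $\mathsf P_1\cup\mathsf P_2\cup\mathsf P_3$ of three paths with the same terminals $s\neq t$ such that any two of them share no vertex other than $s,t$ and no underlying uncolored edge. A bad piece is an almost rainbow theta graph with at least $6$ vertices that is the union of three rainbow paths $\mathsf P_1,\mathsf P_2,\mathsf P_3$ as in the definition of a theta graph. *)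

(* Defs.v *)
From HB Require Import structures.
From mathcomp Require Import all_boot.
From mathcomp Require Import finmap.
Set Implicit Arguments. Unset Strict Implicit. Unset Printing Implicit Defensive.
Local Open Scope fset_scope.

Section ColoredGraphs.
Variables (V C : choiceType).

(* A colored graph: a finite set of pairs (e, alpha), e a 2-element vertex set. *)
Definition cgraph := {fset ({fset V} * C)}.

Definition is_cgraph (G : cgraph) : Prop :=
  (forall p, p \in G -> #|` p.1| = 2) /\
  (forall p q, p \in G -> q \in G -> p.1 = q.1 -> p = q).

Definition uedges (G : cgraph) : {fset {fset V}} := [fset p.1 | p in G].
Definition verts (G : cgraph) : {fset V} := \bigcup_(p <- G) p.1.
Definition colors (G : cgraph) : {fset C} := [fset p.2 | p in G].

Definition rainbow (G : cgraph) : Prop := #|` colors G| = #|` G|.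
Definition almost_rainbow (G : cgraph) : Prop := (#|` colors G|).+1 = #|` G|.

Definition is_path (P : cgraph) (s t : V) : Prop :=
  is_cgraph P /\ s != t /\
  exists xs : seq V, [/\ uniq (s :: xs), last s xs = t &
    uedges P =i [seq [fset q.1; q.2] | q <- zip (s :: xs) xs]].

Definition theta_of (G P1 P2 P3 : cgraph) (s t : V) : Prop :=
  [/\ s != t, [/\ is_path P1 s t, is_path P2 s t & is_path P3 s t],
      G = P1 `|` P2 `|` P3,
      [/\ verts P1 `&` verts P2 `<=` [fset s; t],
          verts P1 `&` verts P3 `<=` [fset s; t] &
          verts P2 `&` verts P3 `<=` [fset s; t]] &
      [/\ uedges P1 `&` uedges P2 = fset0,
          uedges P1 `&` uedges P3 = fset0 &
          uedges P2 `&` uedges P3 = fset0]].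

Definition is_theta (G : cgraph) : Prop :=
  exists P1 P2 P3 s t, theta_of G P1 P2 P3 s t.

Definition bad_piece (B : cgraph) : Prop :=
  [/\ almost_rainbow B, 6 <= #|` verts B| &
      exists P1 P2 P3 s t, [/\ theta_of B P1 P2 P3 s t,
                               rainbow P1, rainbow P2 & rainbow P3]].

End ColoredGraphs.

(* Main.v *)
Require Import Defs.
From HB Require Import structures.
From mathcomp Require Import all_boot.
From mathcomp Require Import finmap.
From Stdlib Require Import Classical.
Set Implicit Arguments. Unset Strict Implicit.
Local Open Scope fset_scope.

Section Aux.
Variables (V C : choiceType).

Lemma rainbowP (G : cgraph V C) : rainbow G <-> {in G &, injective snd}.
Proof.
rewrite /rainbow /colors; split => [H|H].
  by apply/card_in_imfsetP; rewrite H.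
by apply/eqP/card_in_imfsetP.
Qed.

Lemma path_zip (T : eqType) (e : rel T) x s :
  path e x s <-> (forall u w, (u, w) \in zip (x :: s) s -> e u w).
Proof.
elim: s x => [|y s IH] x /=; first by split.
split.
  move=> /andP [Hxy /(IH y) H] u w; rewrite in_cons => /orP [/eqP [-> ->] //|]; exact: H.
move=> H; apply/andP; split; first by apply: H; rewrite in_cons eqxx.
by apply/(IH y) => u w Hz; apply: H; rewrite in_cons Hz orbT.
Qed.

Lemma mem_zip' (S T : eqType) (a : seq S) (b : seq T) u w :
  (u, w) \in zip a b -> u \in a /\ w \in b.
Proof.
elim: a b => [|x a IH] [|y b] //=.
rewrite in_cons => /orP [/eqP [-> ->]|/IH [H1 H2]].
  by rewrite !in_cons !eqxx.
by rewrite !in_cons H1 H2 !orbT.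
Qed.

Section Conn.
Variable g : rel V.
Inductive cn : V -> V -> Prop :=
 | cn0 x : cn x x
 | cnS x y z : g x y -> cn y z -> cn x z.

Lemma cn_trans x y z : cn x y -> cn y z -> cn x z.
Proof. elim=> [//|a b c Hab _ IH] H; exact: cnS Hab (IH H). Qed.

Lemma cn1 x y : g x y -> cn x y.
Proof. move=> H; exact: cnS H (cn0 _). Qed.

Hypothesis gsym : forall x y, g x y = g y x.

Lemma cn_sym x y : cn x y -> cn y x.
Proof.
elim=> [//|a b c Hab _ IH]; first exact: cn0.
apply: cn_trans IH _; apply: cn1; by rewrite gsym.
Qed.

Lemma cn_walk x y : cn x y -> exists w, path g x w /\ last x w = y.
Proof.
elim=> [a|a b c Hab _ [w [H1 H2]]]; first by exists [::].
by exists (b :: w); rewrite /= Hab H1 H2.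
Qed.

Lemma path_cn x s : path g x s -> forall v, v \in x :: s -> cn v (last x s).
Proof.
elim: s x => [|y s IH] x /=.
  by move=> _ v; rewrite in_cons in_nil orbF => /eqP ->; exact: cn0.
move=> /andP [Hxy Hp] v; rewrite in_cons => /orP [/eqP ->|Hv].
  apply: cnS Hxy _; apply: IH Hp _ _; exact: mem_head.
exact: IH Hp _ Hv.
Qed.
End Conn.

Definition ge (U : {fset {fset V}}) (b : {fset V}) : rel V :=
  fun u w => ([fset u; w] \in U) && ([fset u; w] != b).

Lemma fset2C (u w : V) : [fset u; w] = [fset w; u].
Proof. by apply/fsetP => z; rewrite !in_fset2 orbC. Qed.

Lemma ge_sym U b x y : ge U b x y = ge U b y x.
Proof. by rewrite /ge fset2C. Qed.

Lemma Lsplit U b x s : uniq (x :: s) -> path (fun u w => [fset u; w] \in U) x s ->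
  forall v, v \in x :: s -> cn (ge U b) v x \/ cn (ge U b) v (last x s).
Proof.
elim: s x => [|y s IH] x.
  by move=> _ _ v; rewrite in_cons in_nil orbF => /eqP ->; left; exact: cn0.
move=> /= /andP [Hx Hu] /andP [Hxy Hp] v.
rewrite in_cons => /orP [/eqP ->|Hv]; first by left; exact: cn0.
case Hb: ([fset x; y] == b).
  right.
  have Hg : path (ge U b) y s.
    apply: (@sub_in_path _ (mem (y :: s)) _ _ _ y s); last exact: Hp; last by apply/allP => z.
    move=> u w Hu' Hw' /= Huw; rewrite /ge Huw /=; apply/negP => /eqP E.
    have : x \in [fset u; w] by rewrite E -(eqP Hb) in_fset2 eqxx.
    rewrite in_fset2 => /orP [] /eqP Ex; move: Hx; by rewrite Ex ?Hu' ?Hw'.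
  exact: path_cn Hg _ Hv.
case: (IH y Hu Hp v Hv) => H; last by right.
left; apply: cn_trans H _; apply: cn1; by rewrite ge_sym /ge Hxy Hb.
Qed.

Lemma vertsP (G : cgraph V C) v : reflect (exists2 q, q \in G & v \in q.1) (v \in verts G).
Proof.
rewrite /verts; apply: (iffP (@bigfcupP _ _ _ v (fun p => p.1) xpredT)) => [[q /andP [Hq _] H]|[q Hq H]]; exists q => //.
by rewrite Hq.
Qed.

Lemma path_verts (P : cgraph V C) s xs v :
  uedges P =i [seq [fset q.1; q.2] | q <- zip (s :: xs) xs] ->
  v \in verts P -> v \in s :: xs.
Proof.
move=> He /vertsP [q Hq Hv].
have : q.1 \in uedges P by apply: in_imfset.
rewrite He => /mapP [[u w] /mem_zip' [Hu Hw] E].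
move: Hv; rewrite E in_fset2 => /orP [] /eqP -> //.
by rewrite in_cons Hw orbT.
Qed.

Lemma path_conn U b (P : cgraph V C) s t :
  is_path P s t -> {subset uedges P <= U} -> cn (ge U b) s t ->
  forall v, v \in verts P -> cn (ge U b) v s.
Proof.
move=> [_ [_ [xs [Hu Hl He]]]] Hsub Hst v Hv.
have Hvs := path_verts He Hv.
have Hp : path (fun u w => [fset u; w] \in U) s xs.
  apply/path_zip => u w Hz; apply: Hsub; rewrite He.
  by apply/mapP; exists (u, w).
case: (Lsplit b Hu Hp Hvs) => // H.
apply: cn_trans H _; rewrite Hl; apply: cn_sym Hst; exact: ge_sym.
Qed.

Lemma clean_conn U b (P : cgraph V C) s t :
  is_path P s t -> {subset uedges P <= U} -> b \notin uedges P -> cn (ge U b) s t.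
Proof.
move=> [_ [_ [xs [Hu Hl He]]]] Hsub Hb.
have Hp : path (ge U b) s xs.
  apply/path_zip => u w Hz.
  have H : [fset u; w] \in uedges P by rewrite He; apply/mapP; exists (u, w).
  rewrite /ge Hsub //=; apply/negP => /eqP E; move: Hb; by rewrite -E H.
rewrite -Hl; apply: path_cn Hp _ _; exact: mem_head.
Qed.

Lemma disj (A B : cgraph V C) q r : q \in A -> r \in B ->
  uedges A `&` uedges B = fset0 -> q.1 != r.1.
Proof.
move=> Hq Hr D; apply/negP => /eqP E.
have : q.1 \in uedges A `&` uedges B.
  by rewrite in_fsetI in_imfset //= E in_imfset.
by rewrite D in_fset0.
Qed.

Lemma cg_union (A B : cgraph V C) : is_cgraph A -> is_cgraph B ->
  (forall q r, q \in A -> r \in B -> q.1 != r.1) -> is_cgraph (A `|` B).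
Proof.
move=> [sA iA] [sB iB] D; split.
  by move=> p /fsetUP [] ?; [exact: sA | exact: sB].
move=> p q /fsetUP [] Hp /fsetUP [] Hq E; [exact: iA | | | exact: iB].
  by have := D _ _ Hp Hq; rewrite E eqxx.
by have := D _ _ Hq Hp; rewrite E eqxx.
Qed.

Lemma cg_sub (A B : cgraph V C) : is_cgraph B -> A `<=` B -> is_cgraph A.
Proof.
move=> [sB iB] /fsubsetP S; split; first by move=> p /S; exact: sB.
by move=> p q /S Hp /S Hq; exact: iB.
Qed.

Lemma uedges_sub (A B : cgraph V C) : A `<=` B -> {subset uedges A <= uedges B}.
Proof.
move=> /fsubsetP S e /imfsetP [q Hq ->]; apply: in_imfset; exact: S.
Qed.

End Aux.

Theorem mainTheorem5 (V C : choiceType) (B : cgraph V C) :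
  bad_piece B ->
  forall v1 v2 : V, v1 \in verts B -> v2 \in verts B -> v1 != v2 ->
  exists P : cgraph V C, P `<=` B /\ is_path P v1 v2 /\ rainbow P.
Proof.
move=> [HAR _ [P1 [P2 [P3 [s [t [[Hst [HP1 HP2 HP3] HB [_ _ _] [HE12 HE13 HE23]] _ _ _]]]]]]].
move=> v1 v2 Hv1 Hv2 Hne.
have cgB : is_cgraph B.
  rewrite HB; apply: cg_union; first apply: cg_union.
  - by case: HP1.
  - by case: HP2.
  - by move=> q r Hq Hr; exact: disj Hq Hr HE12.
  - by case: HP3.
  by move=> q r /fsetUP [] Hq Hr; [exact: disj Hq Hr HE13 | exact: disj Hq Hr HE23].
have S1 : P1 `<=` B by rewrite HB -fsetUA fsubsetUl.
have S2 : P2 `<=` B.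
  by rewrite HB; apply: fsubset_trans (fsubsetUl _ P3); exact: fsubsetUr.
have S3 : P3 `<=` B by rewrite HB fsubsetUr.
have [p [q [Hp Hq Hpq Hc]]] : exists p q, [/\ p \in B, q \in B, p != q & p.2 = q.2].
  apply: NNPP => Hn.
  have : {in B &, injective snd}.
    move=> x y Hx Hy Hxy; apply/eqP; apply: contraT => Hxy'; exfalso; apply: Hn.
    by exists x, y.
  move/rainbowP; rewrite /rainbow => H; move: HAR; rewrite /almost_rainbow H.
  by move=> /eqP; rewrite eqn_leq ltnn.
have RBp : rainbow (B `\ p).
  have Hcol : colors (B `\ p) = colors B.
    apply/fsetP => c; apply/imfsetP/imfsetP => /= [[r /fsetD1P [_ Hr] ->]|[r Hr ->]].
      by exists r.
    case: (eqVneq r p) => [Erp|Hrp].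
      exists q; last by rewrite Erp.
      by apply/fsetD1P; split => //; rewrite eq_sym.
    by exists r => //; apply/fsetD1P.
  rewrite /rainbow Hcol; move: HAR (cardfsD1 p B); rewrite /almost_rainbow Hp.
  by move=> <- /= [].
set U := uedges B.
set b := p.1.
have Hst' : cn (ge U b) s t.
  case Hb1 : (b \in uedges P1).
    apply: (clean_conn HP2 (uedges_sub S2)); apply/negP => Hb2.
    have : b \in uedges P1 `&` uedges P2 by rewrite in_fsetI Hb1 Hb2.
    by rewrite HE12 in_fset0.
  by apply: (clean_conn HP1 (uedges_sub S1)); rewrite Hb1.
have Hall : forall v, v \in verts B -> cn (ge U b) v s.
  move=> v /vertsP [r Hr Hv]; move: Hr; rewrite HB => /fsetUP [/fsetUP []|] Hr.
  - by apply: (path_conn HP1 (uedges_sub S1) Hst'); apply/vertsP; exists r.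
  - by apply: (path_conn HP2 (uedges_sub S2) Hst'); apply/vertsP; exists r.
  - by apply: (path_conn HP3 (uedges_sub S3) Hst'); apply/vertsP; exists r.
have H12 : cn (ge U b) v1 v2.
  apply: cn_trans (Hall _ Hv1) _; apply: cn_sym (Hall _ Hv2); exact: ge_sym.
have [w [Hpw Hlw]] := cn_walk H12.
have [w' [Hpw' [Huw' Hlw']]] : exists w', [/\ path (ge U b) v1 w', uniq (v1 :: w') & last v1 w' = v2].
  rewrite -Hlw; case: (shortenP Hpw) => w'' h1 h2 _.
  by exists w''.
set pairs := [seq [fset z.1; z.2] | z <- zip (v1 :: w') w'].
exists [fset r in B `\ p | r.1 \in pairs].
have Ssub : [fset r in B `\ p | r.1 \in pairs] `<=` B `\ p.
  by apply/fsubsetP => r; rewrite !inE => /andP [].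
have SsubB : B `\ p `<=` B by apply: fsubsetDl.
split; first exact: fsubset_trans Ssub SsubB.
split; last first.
  move/rainbowP: RBp => Hinj; apply/rainbowP => x y Hx Hy.
  by apply: Hinj; apply: (fsubsetP Ssub).
split; first exact: cg_sub cgB (fsubset_trans Ssub SsubB).
split => //; exists w'; split => // e.
apply/imfsetP/idP => /= [[r Hr ->]|He].
  by move: Hr; rewrite !inE => /andP [].
move: (He) => /mapP [[u x] Hz Ee].
have /= := (iffLR (path_zip _ _ _) Hpw' u x Hz).
rewrite /ge -Ee => /andP [/imfsetP [r Hr Er] Hneb].
exists r => //; rewrite !inE /= -Er He andbT.
apply/andP; split => //; apply/negP => /eqP Erp; move: Hneb; by rewrite Er Erp eqxx.
Qed.
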